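(* Let $\mathcal A=(Q,\Sigma,\delta,\rho)$ be a connected bireversible Mealy automaton whose labeled orbit tree $\mathfrak t(\mathcal A)$ has no active self-liftable branch, and let $\mathfrak j$ be a jungle tree with trunk of length $n$. For a $\mathfrak j$-word $\mathbf u$ with $|\mathbf u|<n$, the number of $\sim$-classes of stems containing a stem with prefix $\mathbf u$ depends only on $|\mathbf u|$: any two $\mathfrak j$-words of the same length $<n$ have the same number of such classes.
   Context: Mealy automata. A Mealy automaton is $\mathcal A=(Q,\Sigma,\delta,\rho)$ with $Q,\Sigma$ finite non-empty sets, $\delta=(\delta_i\colon Q\to Q)_{i\in\Sigma}$, $\rho=(\rho_x\colon\Sigma\to\Sigma)_{x\in Q}$; transitions $x\xrightarrow{i\mid\rho_x(i)}\delta_i(x)$. Invertible: each $\rho_x$ a permutation of $\Sigma$; reversible: each $\delta_i$ a permutation of $Q$; bireversible: invertible, reversible, and for each $j\in\Sigma$ the map $x\mapsto\delta_{\rho_x^{-1}(j)}(x)$ is a permutation of $Q$. Connected: the directed graph on $Q$ with edges $x\to\delta_i(x)$ is connected. Extensions: $\rho_x(i\mathbf s)=\rho_x(i)\rho_{\delta_i(x)}(\mathbf s)$; $\rho_{x_1\cdots x_m}=\rho_{x_m}\circ\cdots\circ\rho_{x_1}$; $\delta_i(x\mathbf u)=\delta_i(x)\delta_{\rho_x(i)}(\mathbf u)$ on $Q^*$, $\delta_{i_1\cdots i_m}=\delta_{i_m}\circ\cdots\circ\delta_{i_1}$. The connected components of $\mathcal A^n$ (stateset $Q^n$, transitions $\mathbf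 u\xrightarrow{i\mid\rho_{\mathbf u}(i)}\delta_i(\mathbf u)$) are, for reversible $\mathcal A$, the orbits of $Q^n$ under the maps $\delta_{\mathbf s}$. Orbit tree $\mathfrak t(\mathcal A)$: vertices at level $n\ge0$ are the connected components of $\mathcal A^n$; an edge from the component of $\mathbf u\in Q^n$ to that of $\mathbf ux$ for all $\mathbf u,x$; edge $C\to D$ labeled $\#D/\#C$. $\top,\bot$ = first/last vertex of a downward path; level of an edge/path = level of its top vertex. A word of $Q^*\cup Q^\omega$ represents the initial path through the components of its prefixes. Edge $e$ is liftable to $f$ if every word of $\bot(e)$ has a suffix in $\bot(f)$; paths are liftable if corresponding edges are. $f$ is a legitimate child of $e$ if $\top(f)=\bot(e)$ and $f$ is liftable to $e$. A path/subtree $\mathfrak s$ is $k$-self-liftable if for all $i\ge0$ every path in $\mathfrak s$ starting at level $i+k$ is liftable to a path in $\mathfrak s$ starting at level $i$; self-liftable if $k$-self-liftable for some $k>0$. A branch (infinite initial path) is active if its labels are not eventually all $1$. Jungle trees: for a finite 1-self-liftable initial path $\mathbf e$ of length $n$ whose last edge has at least two legitimate children, all labeled $1$, $\mathfrak j(\mathbf e)$ consists of $\mathbf e$ plus all edges descending from $\bot(\mathbf e)$ that are liftable to the last edge of $\mathbf e$. Stems: the words of $\bot(\mathbf e)\subseteq Q^n$. A $\mathfrak j$-word is a word representing an initial path of $\mathfrak j$. For stems $\mathbf u,\mathbf v$: $\mathbf u\sim\mathbf v$ iff there is $\mathbf s\in Q^*$ such that $\mathbf{usv}$ is a $\mathfrak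 j$-word and $\rho_{\mathbf{us}}$ is the identity of $\Sigma^*$; $\sim$ is an equivalence relation. *)

(* Defs.v *)
From mathcomp Require Import all_boot.
From mathcomp Require Import boolp.

Set Implicit Arguments.
Unset Strict Implicit.
Unset Printing Implicit Defensive.

Section Mealy.
(* A Mealy automaton (Q, S, delta, rho): transitions x --i|rho x i--> delta i x. *)
Context {Q S : finType} (delta : S -> Q -> Q) (rho : Q -> S -> S).

Definition invertible := forall x : Q, bijective (rho x).
Definition reversible := forall i : S, bijective (delta i).
Definition bireversible :=
  [/\ invertible, reversible &
      forall j : S, bijective (fun x : Q => delta (finv (rho x) j) x)].

Definition aut_edge (x y : Q) : bool := [exists i, delta i x == y].
Definition connected :=
  forall x y : Q, connect (fun a b => aut_edge a b || aut_edge b a) x y.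

Fixpoint rhoW (x : Q) (s : seq S) : seq S :=
  if s is i :: s' then rho x i :: rhoW (delta i x) s' else [::].
(* rho_{x1...xm} = rho_{xm} o ... o rho_{x1} on S^* *)
Definition rhoQ (u : seq Q) (s : seq S) : seq S :=
  foldl (fun s x => rhoW x s) s u.

Fixpoint deltaW (i : S) (u : seq Q) : seq Q :=
  if u is x :: u' then delta i x :: deltaW (rho x i) u' else [::].

Definition stepn n (u v : n.-tuple Q) : bool := [exists i, deltaW i u == v].

(* compb u v : v lies in the connected component of A^(|u|) containing u *)
Definition compb (u v : seq Q) : bool :=
  (size v == size u) &&
  [exists w : (size u).-tuple Q,
     (val w == v) &&
     connect (fun a b => stepn a b || stepn b a) (in_tuple u) w].

Definition ccard (u : seq Q) : nat :=
  #|[set w : (size u).-tuple Q | compb u (val w)]|.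

(* Edges of the orbit tree: the edge with bottom vertex the component of w
   (|w| >= 1) and top vertex the component of its prefix of length |w|-1.
   Its label #D/#C equals 1 iff ccard w = ccard (take (size w).-1 w). *)

(* edge (represented by) w is liftable to edge w': every word of bot(w) has a
   suffix in bot(w') *)
Definition edge_lift (w w' : seq Q) : Prop :=
  forall v, compb w v -> compb w' (drop (size v - size w') v).

(* The path of length L starting at level i1 through the component of w1
   (|w1| >= i1 + L) is liftable to the path of length L starting at level i2
   through the component of w2: corresponding edges are liftable. *)
Definition path_lift (i1 L : nat) (w1 : seq Q) (i2 : nat) (w2 : seq Q) : Prop :=
  forall j, j < L -> edge_lift (take (i1 + j).+1 w1) (take (i2 + j).+1 w2).

Definition branch (b : nat -> seq Q) : Prop :=
  forall m, size (b m) = m /\ compb (b m) (take m (b m.+1)).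

(* active: labels not eventually all 1 *)
Definition active_branch (b : nat -> seq Q) : Prop :=
  ~ (exists N, forall m, N <= m -> ccard (b m.+1) = ccard (b m)).

Definition k_self_liftable_branch (k : nat) (b : nat -> seq Q) : Prop :=
  forall i L, path_lift (i + k) L (b (i + k + L)) i (b (i + L)).

Definition self_liftable_branch (b : nat -> seq Q) : Prop :=
  exists k, 0 < k /\ k_self_liftable_branch k b.

Definition no_active_self_liftable_branch : Prop :=
  forall b, branch b -> self_liftable_branch b -> ~ active_branch b.

(* Finite initial path (trunk) e of length n = size t, represented by a word t
   of bot(e).  k-self-liftable: every path in e starting at level i+k is
   liftable to the path in e of the same length starting at level i. *)
Definition k_self_liftable_trunk (k : nat) (t : seq Q) : Prop :=
  forall i L, i + k + L <= size t -> path_lift (i + k) L t i t.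

(* f (represented by w) is a legitimate child of the last edge of the trunk t:
   top(f) = bot(e) and f is liftable to the last edge of e. *)
Definition legit_child (t w : seq Q) : Prop :=
  size w = (size t).+1 /\ compb t (take (size t) w) /\ edge_lift w t.

Definition jungle_trunk (t : seq Q) : Prop :=
  [/\ 0 < size t,
      k_self_liftable_trunk 1 t,
      (exists w1 w2, legit_child t w1 /\ legit_child t w2 /\ ~~ compb w1 w2) &
      (forall w, legit_child t w -> ccard w = ccard (take (size t) w))].

(* j(t)-words: words representing initial paths of the jungle tree j(t):
   prefixes of the trunk, or extensions below bot(t) all of whose edges at
   levels >= n are liftable to the last edge of the trunk. *)
Definition jword (t w : seq Q) : Prop :=
  if size w <= size t then is_true (compb (take (size w) t) w)
  else compb t (take (size t) w) /\
       (forall m, size t <= m < size w -> edge_lift (take m.+1 w) t).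

(* stems: words of bot(t) *)
Definition stem (t v : seq Q) : bool := compb t v.

Definition jsim (t u v : seq Q) : Prop :=
  exists s : seq Q, jword t (u ++ s ++ v) /\ forall z : seq S, rhoQ (u ++ s) z = z.

Definition nclasses (t u : seq Q) : nat :=
  #|[set [set w : (size t).-tuple Q | stem t (val w) && `[< jsim t (val v) (val w) >]]
     | v in [set v : (size t).-tuple Q | stem t (val v) && prefix u (val v)]]|.

End Mealy.

(* Main.v *)
Require Import Defs.
From mathcomp Require Import all_boot all_fingroup.
From mathcomp Require Import boolp.
Set Implicit Arguments. Unset Strict Implicit.

Lemma size_deltaW (Q S : finType) (delta : S -> Q -> Q) (rho : Q -> S -> S) i u :
  size (deltaW delta rho i u) = size u.
Proof. by elim: u i => [|x u IH] i //=; rewrite IH. Qed.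

Fixpoint rl (Q S : finType) (rho : Q -> S -> S) (i : S) (u : seq Q) : S :=
  if u is x :: u' then rl rho (rho x i) u' else i.

Lemma deltaW_cat (Q S : finType) (delta : S -> Q -> Q) (rho : Q -> S -> S) i u r :
  deltaW delta rho i (u ++ r) = deltaW delta rho i u ++ deltaW delta rho (rl rho i u) r.
Proof. by elim: u i => [|x u IH] i //=; rewrite IH. Qed.

Lemma deltaW_take (Q S : finType) (delta : S -> Q -> Q) (rho : Q -> S -> S) i u m :
  take m (deltaW delta rho i u) = deltaW delta rho i (take m u).
Proof. by elim: u i m => [|x u IH] i [|m] //=; rewrite IH. Qed.

Lemma deltaW_inj (Q S : finType) (delta : S -> Q -> Q) (rho : Q -> S -> S) i :
  reversible delta -> injective (deltaW delta rho i).
Proof.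
move=> Hr u; elim: u i => [|x u IH] i [|y v] //= [Exy Euv].
have ? : x = y by apply: (bij_inj (Hr i)).
by subst y; rewrite (IH _ _ Euv).
Qed.

Lemma rhoQ_single (Q S : finType) (delta : S -> Q -> Q) (rho : Q -> S -> S) u i :
  rhoQ delta rho u [:: i] = [:: rl rho i u].
Proof. by elim: u i => [|x u IH] i //=; rewrite /rhoQ /= -/(rhoQ _ _ _ _) IH. Qed.

Lemma rhoQ_cons (Q S : finType) (delta : S -> Q -> Q) (rho : Q -> S -> S) u i z :
  rhoQ delta rho u (i :: z) = rl rho i u :: rhoQ delta rho (deltaW delta rho i u) z.
Proof. by elim: u i z => [|x u IH] i z //=; rewrite /rhoQ /= -!/(rhoQ _ _ _ _) IH. Qed.

Definition E (Q S : finType) (delta : S -> Q -> Q) (rho : Q -> S -> S) n :=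
  fun a b : n.-tuple Q => stepn delta rho a b || stepn delta rho b a.

Lemma compbE (Q S : finType) (delta : S -> Q -> Q) (rho : Q -> S -> S) n (a b : n.-tuple Q) :
  compb delta rho a b = connect (@E Q S delta rho n) a b.
Proof.
case: a => s Hs; have Es : size s = n by apply/eqP. subst n.
have -> : Tuple Hs = in_tuple s by exact: val_inj.
rewrite /compb /= size_tuple eqxx /=.
apply/existsP/idP => [[w /andP[/eqP Hw C]]|C].
  by have <- : w = b by exact: val_inj.
by exists b; rewrite eqxx.
Qed.

Lemma compb_size (Q S : finType) (delta : S -> Q -> Q) (rho : Q -> S -> S) u v :
  compb delta rho u v -> size v = size u.
Proof. by case/andP => /eqP. Qed.

Lemma tupleOf (Q : finType) n (v : seq Q) : size v = n -> exists tv : n.-tuple Q, val tv = v.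
Proof. by move=> H; exists (Tuple (introT eqP H)). Qed.

Lemma E_sym (Q S : finType) (delta : S -> Q -> Q) (rho : Q -> S -> S) n :
  connect_sym (@E Q S delta rho n).
Proof. by apply: sym_connect_sym => a b; rewrite /E orbC. Qed.

Lemma compb_sym (Q S : finType) (delta : S -> Q -> Q) (rho : Q -> S -> S) u v :
  compb delta rho u v -> compb delta rho v u.
Proof.
move=> C; have Hs := compb_size C.
have [tv Ev] := tupleOf Hs; subst v.
have e1 := compbE delta rho (in_tuple u) tv.
have e2 := compbE delta rho tv (in_tuple u).
by rewrite e2 E_sym -e1.
Qed.

Lemma compb_trans (Q S : finType) (delta : S -> Q -> Q) (rho : Q -> S -> S) u v w :
  compb delta rho u v -> compb delta rho v w -> compb delta rho u w.
Proof.
move=> C1 C2; have H1 := compb_size C1; have H2 := compb_size C2.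
have [tv Ev] := tupleOf H1.
have [tw Ew] := tupleOf (etrans H2 H1).
subst v w.
have e1 := compbE delta rho (in_tuple u) tv.
have e2 := compbE delta rho tv tw.
have e3 := compbE delta rho (in_tuple u) tw.
rewrite /= in e1 e3; rewrite e3; rewrite e1 in C1; rewrite e2 in C2.
exact: connect_trans C1 C2.
Qed.

Lemma compb_step (Q S : finType) (delta : S -> Q -> Q) (rho : Q -> S -> S) i u :
  compb delta rho u (deltaW delta rho i u).
Proof.
have [tv Ev] := tupleOf (size_deltaW delta rho i u).
have e1 := compbE delta rho (in_tuple u) tv.
rewrite /= Ev in e1; rewrite e1.
apply: connect1; apply/orP; left; apply/existsP; exists i; by rewrite Ev.
Qed.

Lemma compb_refl (Q S : finType) (delta : S -> Q -> Q) (rho : Q -> S -> S) u :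
  compb delta rho u u.
Proof. by have := compbE delta rho (in_tuple u) (in_tuple u); rewrite /= connect0. Qed.

Lemma rl_cat (Q : finType) (S : finType) (rho : Q -> S -> S) i u r :
  rl rho i (u ++ r) = rl rho (rl rho i u) r.
Proof. by elim: u i => [|x u IH] i //=. Qed.

Lemma jword_step (Q S : finType) (delta : S -> Q -> Q) (rho : Q -> S -> S) t i W :
  jword delta rho t W -> jword delta rho t (deltaW delta rho i W).
Proof.
rewrite /jword size_deltaW; case: ifP => _.
  by move=> C; apply: compb_trans C (compb_step _ _ _ _).
move=> [C H]; split.
  by rewrite deltaW_take; apply: compb_trans C (compb_step _ _ _ _).
move=> m Hm v Cv; rewrite deltaW_take in Cv.
apply: (H m Hm); exact: compb_trans (compb_step _ _ _ _) Cv.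
Qed.

Lemma jsim_step (Q S : finType) (delta : S -> Q -> Q) (rho : Q -> S -> S) t i v w :
  jsim delta rho t v w -> jsim delta rho t (deltaW delta rho i v) (deltaW delta rho i w).
Proof.
move=> [s [J R]].
have ri : rl rho i (v ++ s) = i.
  by have := R [:: i]; rewrite rhoQ_single => -[].
exists (deltaW delta rho (rl rho i v) s); split.
  have := jword_step i J; rewrite !deltaW_cat.
  by rewrite -rl_cat ri.
move=> z; have := R (i :: z); rewrite rhoQ_cons ri => -[].
by rewrite deltaW_cat.
Qed.

Definition dT (Q S : finType) (delta : S -> Q -> Q) (rho : Q -> S -> S) i n (a : n.-tuple Q)
  : n.-tuple Q :=
  Tuple (introT eqP (etrans (size_deltaW delta rho i a) (size_tuple a))).

Lemma dT_inj (Q S : finType) (delta : S -> Q -> Q) (rho : Q -> S -> S) i n :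
  reversible delta -> injective (@dT Q S delta rho i n).
Proof.
move=> Hr a b E; apply: val_inj; apply: (@deltaW_inj _ _ delta rho i Hr).
by have := congr1 val E.
Qed.

Lemma jsim_iter (Q S : finType) (delta : S -> Q -> Q) (rho : Q -> S -> S) t i k v w :
  jsim delta rho t v w ->
  jsim delta rho t (iter k (deltaW delta rho i) v) (iter k (deltaW delta rho i) w).
Proof. by elim: k => [|k IH] //= J; apply: jsim_step; apply: IH. Qed.

Lemma compb_stepE (Q S : finType) (delta : S -> Q -> Q) (rho : Q -> S -> S) t i v :
  compb delta rho t (deltaW delta rho i v) = compb delta rho t v.
Proof.
apply/idP/idP => C.
  apply: compb_trans C (compb_sym (compb_step _ _ _ _)).
apply: compb_trans C (compb_step _ _ _ _).
Qed.

Lemma prefix_stepE (Q S : finType) (delta : S -> Q -> Q) (rho : Q -> S -> S) i u v :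
  reversible delta ->
  prefix (deltaW delta rho i u) (deltaW delta rho i v) = prefix u v.
Proof.
move=> Hr; rewrite !prefixE size_deltaW deltaW_take.
apply/eqP/eqP => [|->] //; exact: deltaW_inj.
Qed.

Lemma nclasses_step (Q S : finType) (delta : S -> Q -> Q) (rho : Q -> S -> S) t i u :
  reversible delta ->
  nclasses delta rho t (deltaW delta rho i u) = nclasses delta rho t u.
Proof.
move=> Hr.
set n := size t.
pose p : {perm n.-tuple Q} := perm (@dT_inj _ _ delta rho i n Hr).
have pv : forall a, val (p a) = deltaW delta rho i a by move=> a; rewrite permE.
have piter : forall k a, val (iter k p a) = iter k (deltaW delta rho i) (val a).
  by elim=> [|k IH] a //=; rewrite pv IH.
have jsimE : forall a b, `[< jsim delta rho t (p a) (p b) >] = `[< jsim delta rho t a b >].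
  move=> a b; apply/asboolP/asboolP => J; last by rewrite !pv; exact: jsim_step.
  have := jsim_iter i (#[p]%g.-1) J; rewrite -!piter -!iterSr prednK ?order_gt0 //.
  by rewrite -!permX (expg_order p) !perm1.
pose Cl (v : n.-tuple Q) := [set w : n.-tuple Q | stem delta rho t w && `[< jsim delta rho t v w >]].
pose A (u : seq Q) := [set v : n.-tuple Q | stem delta rho t v && prefix u v].
have HA : A (deltaW delta rho i u) = p @: A u.
  apply/setP => v; rewrite -(permKV p v) mem_imset; last exact: perm_inj.
  by rewrite !inE /stem pv compb_stepE prefix_stepE.
have HC : forall v, Cl (p v) = p @: Cl v.
  move=> v; apply/setP => w; rewrite -(permKV p w) mem_imset; last exact: perm_inj.
  by rewrite !inE /stem jsimE pv compb_stepE.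
rewrite /nclasses -/n.
change (#|[set Cl v | v in A (deltaW delta rho i u)]| = #|[set Cl v | v in A u]|).
rewrite HA -imset_comp (eq_imset _ HC).
rewrite (imset_comp (fun X : {set n.-tuple Q} => p @: X) Cl) (card_imset _ (imset_inj (@perm_inj _ p))).
by [].
Qed.

Lemma nclasses_connect (Q S : finType) (delta : S -> Q -> Q) (rho : Q -> S -> S) t m
  (a b : m.-tuple Q) :
  reversible delta -> connect (@E Q S delta rho m) a b ->
  nclasses delta rho t a = nclasses delta rho t b.
Proof.
move=> Hr /connectP [p Hp ->]; elim: p a Hp => [|c p IH] a //= /andP [Eac Hp].
rewrite -(IH c Hp).
have stepE : forall x y : m.-tuple Q, stepn delta rho x y ->
    nclasses delta rho t x = nclasses delta rho t y.
  by move=> x y /existsP [i /eqP <-]; rewrite nclasses_step.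
by case/orP: Eac => [/stepE|/stepE ->].
Qed.

Theorem corollary5p18 (Q S : finType) (delta : S -> Q -> Q) (rho : Q -> S -> S)
    (t : seq Q) (n : nat) :
  connected delta ->
  bireversible delta rho ->
  no_active_self_liftable_branch delta rho ->
  jungle_trunk delta rho t ->
  size t = n ->
  forall u u' : seq Q,
    jword delta rho t u -> jword delta rho t u' ->
    size u = size u' -> size u < n ->
    nclasses delta rho t u = nclasses delta rho t u'.
Proof.
move=> _ [_ Hr _] _ _ Hn u u' J J' Hs Hl.
have Hl' : size u' <= size t by rewrite -Hs Hn ltnW.
have Hl0 : size u <= size t by rewrite Hn ltnW.
rewrite /jword Hl0 in J; rewrite /jword Hl' -Hs in J'.
have C : compb delta rho u u' := compb_trans (compb_sym J) J'.
have [tv Ev] := tupleOf (esym Hs); subst u'.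
have e1 := compbE delta rho (in_tuple u) tv.
rewrite /= in e1; rewrite e1 in C.
exact: (nclasses_connect t Hr C).
Qed.
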